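(* For the scaled single-server CDN described in the context, $$\lim_{c\to\infty}\frac1c J_1^c=\lim_{c\to\infty}\frac1c J_{ub}^c,$$ where $J_1^c$ is the throughput of the scaled system and $J_{ub}^c=\min\big(\lambda^c(0),\mu^c\big)$.
   Context: A single surrogate server in a planar network region $G$ of area $\mathcal{A}$ serves requests first-come-first-served with exponential service rate $\mu^c=c\mu$, where $c\ge1$ is a scaling factor. Requests arrive as a Poisson process of rate $\lambda^c=c\lambda$ with locations uniform on $G$; the disc of radius $\psi$ around the server lies in $G$; $\mathcal{A}$ and the latency bound $\psi>0$ do not depend on $c$. A request arriving when the server holds $n$ requests is routed to it iff its location is within distance $\psi-(n+1)/\mu^c$ of the server. Thus the number of requests is a birth–death chain on $\{0,\dots,N^c\}$, $N^c=\lceil\psi c\mu-1\rceil$, with death rate $\mu^c$ and birth rate $\lambda^c(n)=\frac{c\lambda}{\mathcal{A}}\pi\big(\psi-\frac{n+1}{c\mu}\big)^2$ for $n<N^c$ ($0$ at $N^c$). The throughput $J_1^c$ is the long-run rate of served requests. *)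

(* Defs.v *)
From HB Require Import structures.
From mathcomp Require Import all_boot all_order all_algebra.
From mathcomp Require Import all_classical all_reals all_analysis.
Set Implicit Arguments. Unset Strict Implicit. Unset Printing Implicit Defensive.
Import Order.TTheory GRing.Theory Num.Theory.
Import numFieldNormedType.Exports.
Local Open Scope ring_scope.

Section CDN.
Variable R : realType.
(* parameters: arrival rate lam, service rate mu, area A, latency bound psi,
   scaling factor c *)
Variables (lam mu A psi : R).

Definition capN (c : R) : nat :=
  let x := psi * c * mu - 1 in
  if 0 < x then `|Num.ceil x|%N else 0%N.

Definition lamc (c : R) : R := c * lam.
Definition muc (c : R) : R := c * mu.

Definition birth (c : R) (n : nat) : R :=
  if (n < capN c)%N
  then lamc c / A * pi * (psi - n.+1%:R / muc c) ^+ 2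
  else 0.

Definition death (c : R) (n : nat) : R := if (0 < n)%N then muc c else 0.

(* p is a stationary distribution of the birth-death chain on {0,...,N^c}:
   a probability vector satisfying the global balance equations p Q = 0. *)
Definition stationary (c : R) (p : nat -> R) : Prop :=
  (forall n, (n <= capN c)%N -> 0 <= p n) /\
  \sum_(0 <= n < (capN c).+1) p n = 1 /\
  (forall n, (n <= capN c)%N ->
     p n * (birth c n + death c n) =
       (if n is m.+1 then p m * birth c m else 0)
       + (if (n < capN c)%N then p n.+1 * death c n.+1 else 0)).

(* throughput J_1^c: long-run rate of served requests = mu^c P(server busy)
   under the stationary distribution p *)
Definition throughput (c : R) (p : nat -> R) : R :=
  muc c * \sum_(1 <= n < (capN c).+1) p n.

Definition Jub (c : R) : R := Num.min (birth c 0) (muc c).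

End CDN.

(* Main.v *)
Require Import Defs.
From HB Require Import structures.
From mathcomp Require Import all_boot all_order all_algebra.
From mathcomp Require Import all_classical all_reals all_analysis.
From mathcomp Require Import ring lra.
Import Order.TTheory GRing.Theory Num.Theory.
Import numFieldNormedType.Exports.
Local Open Scope classical_set_scope.
Local Open Scope ring_scope.

Section Aux.
Set Implicit Arguments. Unset Strict Implicit.
Variable R : realFieldType.

Lemma sum_skip (f : nat -> R) N m : (m <= N)%N ->
  \sum_(0 <= n < N.+1) f n =
  f m + \sum_(0 <= n < N) f (if (n < m)%N then n else n.+1).
Proof.
elim: N m => [|N IH] m hm.
  by move: hm; rewrite leqn0 => /eqP ->; rewrite big_nat1 big_geq // addr0.
rewrite big_nat_recr //=.
case: (ltngtP m N.+1) => [hlt|hgt|->].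
- rewrite (IH m) // big_nat_recr //= -addrA; congr (_ + (_ + _)).
  by rewrite ifF //; apply/negbTE; rewrite -leqNgt.
- by move: hm; rewrite leqNgt hgt.
- rewrite [in RHS]addrC; congr (_ + _).
  by apply: eq_big_nat => n /andP[_ ->].
Qed.

Lemma db_lemma (u b d : nat -> R) N : d 0%N = 0 ->
  (forall n, (n <= N)%N -> u n * (b n + d n) =
     (if n is m.+1 then u m * b m else 0)
     + (if (n < N)%N then u n.+1 * d n.+1 else 0)) ->
  forall n, (n < N)%N -> u n.+1 * d n.+1 = u n * b n.
Proof.
move=> d0 hb; elim=> [|n IH] hn.
  by have := hb 0%N (ltnW hn); rewrite hn d0 addr0 add0r => ->.
have := hb n.+1 (ltnW hn); rewrite hn -IH ?(ltnW hn) //.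
move=> h; rewrite mulrDr in h; lra.
Qed.

Lemma key (u : nat -> R) (N K : nat) (q : R) : (0 < K)%N -> (K <= N)%N ->
  0 <= q -> q <= 1 -> (forall n, (n <= N)%N -> 0 <= u n) ->
  \sum_(0 <= n < N.+1) u n = 1 ->
  (forall n, (n < K)%N -> q * u n <= u n.+1) ->
  q * (1 - K%:R^-1) <= \sum_(1 <= n < N.+1) u n.
Proof.
move=> K0 KN q0 q1 u0 s1 hq.
set T := \sum_(1 <= n < N.+1) u n.
have Tsh : T = \sum_(0 <= n < N) u n.+1 by rewrite /T big_add1.
have hm : forall m, (m <= K)%N -> q * (1 - u m) <= T.
  move=> m hmK.
  rewrite -s1 (sum_skip u (leq_trans hmK KN)) addrC addKr mulr_sumr Tsh.
  apply: ler_sum_nat => n /andP[_ hn].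
  case: ifP => hnm; first by apply: hq; apply: leq_trans hmK.
  by rewrite ler_piMl // u0.
have T1 : T <= 1.
  rewrite -s1 big_ltn // lerDr; exact: u0.
have Ts : \sum_(1 <= m < K.+1) u m <= T.
  rewrite /T [X in _ <= X](big_cat_nat _ (n:=K.+1)) //=.
  rewrite -[X in X <= _]addr0 lerD2l.
  rewrite big_nat_cond; apply: sumr_ge0 => i /andP[/andP[_ hi] _].
  by apply: u0; rewrite -ltnS.
have S : \sum_(1 <= m < K.+1) q * (1 - u m) <= \sum_(1 <= m < K.+1) T.
  apply: ler_sum_nat => m /andP[_ hmK]; apply: hm; by rewrite -ltnS.
rewrite -mulr_sumr sumrB !sumr_const_nat subSS subn0 in S.
rewrite -(mulr_natr T) in S.
move: S Ts T1; clear Tsh hm.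
move: (\sum_(1 <= m < K.+1) u m) => s.
have : 1 <= K%:R :> R by rewrite ler1n.
move: (K%:R) => k; move: T => t. clear - q0 q1.
move=> k1 S Ts T1.
have h1 : q * (k - 1) <= t * k.
  apply: le_trans S; apply: ler_wpM2l => //; lra.
have k0 : 0 < k by lra.
have e : q * (1 - k^-1) = (q * (k - 1)) / k by field; rewrite gt_eqF.
by rewrite e ler_pdivrMr //; lra.
Qed.
End Aux.

Lemma capN_le (R : realType) (mu psi c : R) : 0 <= psi * c * mu ->
  (capN mu psi c)%:R <= psi * c * mu.
Proof.
move=> h; rewrite /capN; case: ifP => hx //.
set x := psi * c * mu - 1 in hx *.
case E: (Num.ceil x) => [n|n].
  have := ceilB1_lt x; rewrite E intrB /=.
  rewrite -[(Posz n)%:~R]/(n%:R) /x; lra.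
have := ceil_ge0 x; rewrite E (_ : -1 < x); [by [] | lra].
Qed.

Lemma capN_ge (R : realType) (mu psi c : R) (K : nat) :
  K%:R + 1 < psi * c * mu -> (K <= capN mu psi c)%N.
Proof.
move=> h; rewrite /capN.
set x := psi * c * mu - 1.
have hx : 0 < x.
  have : 0 <= K%:R :> R by [].
  rewrite /x; lra.
rewrite hx.
have := ceil_gt_int x K; rewrite (_ : K%:~R = K%:R :> R) //.
have -> : K%:R < x by rewrite /x; lra.
case E: (Num.ceil x) => [n|n] //= hK.
by move: hK; rewrite ltz_nat => /ltnW.
Qed.

Lemma main_bounds (R : realType) (lam mu A psi : R)
  (hlam : 0 < lam) (hmu : 0 < mu) (hA : 0 < A) (hpsi : 0 < psi)
  (p : R -> nat -> R)
  (hp : forall c, 1 <= c -> stationary lam mu A psi c (p c)) (e : R) (e0 : 0 < e) :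
  exists M : R, forall c, M < c ->
   (Num.min (lam / A * pi * psi ^+ 2) mu - e <= Jub lam mu A psi c / c
      <= Num.min (lam / A * pi * psi ^+ 2) mu) /\
   (Num.min (lam / A * pi * psi ^+ 2) mu - e <= throughput mu psi c (p c) / c
      <= Num.min (lam / A * pi * psi ^+ 2) mu).
Proof.
have pi0 : 0 < pi :> R := pi_gt0 R.
set a := lam / A * pi.
set l := Num.min (a * psi ^+ 2) mu.
have a0 : 0 < a by rewrite /a !mulr_gt0 ?invr_gt0.
have aE : a = lam / A * pi by [].
clearbody a.
have ps2 : 0 < psi ^+ 2 by rewrite exprn_gt0.
have l0 : 0 < l by rewrite /l lt_min mulr_gt0 ?hmu.
have la : l <= a * psi ^+ 2 by rewrite /l ge_min lexx.
have lmu : l <= mu by rewrite /l ge_min lexx orbT.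
have lE : l = Num.min (a * psi ^+ 2) mu by [].
clearbody l.
set z := Num.ceil (2 * l / e).
set K := (`|z|%N).+1.
have K1 : (0 < K)%N by [].
have Kr : 1 <= K%:R :> R by rewrite ler1n.
have Ke : l / K%:R <= e / 2.
  have h1 : 2 * l / e <= K%:R.
    have h2 := ceil_ge (2 * l / e).
    have h3 : z%:~R <= K%:R :> R.
      rewrite /K; case: (z) => n.
        by rewrite -[(Posz n)%:~R]/(n%:R) ler_nat.
      apply: (le_trans (y := 0)); last by [].
      by rewrite -[0]/(0%:~R : R) ler_int.
    rewrite -/z in h2; lra.
  rewrite ler_pdivrMr in h1 => //.
  rewrite ler_pdivrMr; [lra | lra].
set d := e / (4 * (l + e)).
have d0 : 0 < d by rewrite /d divr_gt0 // mulr_gt0 // addr_gt0.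
have dd : d * (4 * (l + e)) = e by rewrite /d mulfVK // gt_eqF // mulr_gt0 // addr_gt0.
have d1 : d < 1.
  have : 0 < d * l by rewrite mulr_gt0.
  have : 0 < d * e by rewrite mulr_gt0.
  move: dd; clear; move=> dd h1 h2.
  nra.
have ld : l * d <= e / 4.
  have : 0 < d * e by rewrite mulr_gt0.
  move: dd; clear; move=> dd h1; nra.
clearbody d.
set q := l / mu * (1 - d) ^+ 2.
have q0 : 0 <= q.
  rewrite /q; apply: mulr_ge0; first by apply: divr_ge0; apply: ltW.
  apply: exprn_ge0; lra.
have q1 : q <= 1.
  rewrite /q; apply: (le_trans (y := 1 * 1)); last by rewrite mulr1.
  apply: ler_pM; [ |rewrite exprn_ge0 //; lra| |].
  - by rewrite divr_ge0 ?ltW.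
  - by rewrite ler_pdivrMr // mul1r.
  - rewrite expr2 -[X in _ <= X]mulr1; apply: ler_pM; lra.
have qmu : q * mu = l * (1 - d) ^+ 2 by rewrite /q mulrAC divfK // gt_eqF.
clearbody q.
have f1 : 0 < (K%:R + 1) / (psi * mu).
  by apply: divr_gt0; [rewrite natr1 ltr0n | rewrite mulr_gt0].
have f2 : 0 < K%:R / (mu * psi * d).
  apply: divr_gt0; first by rewrite ltr0n.
  apply: mulr_gt0 => //; exact: mulr_gt0.
exists (1 + (K%:R + 1) / (psi * mu) + K%:R / (mu * psi * d)) => c hc.
have c1 : 1 < c by lra.
have c0 : 0 < c by lra.
have cmu0 : 0 < c * mu by rewrite mulr_gt0.
have hK1 : K%:R + 1 < psi * c * mu.
  have : (K%:R + 1) / (psi * mu) < c by lra.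
  rewrite ltr_pdivrMr ?mulr_gt0 // => h.
  have -> : psi * c * mu = c * (psi * mu) by ring.
  done.
have hKd : K%:R / (c * mu) <= psi * d.
  have : K%:R / (mu * psi * d) <= c by lra.
  rewrite ler_pdivrMr ?mulr_gt0 // => h.
  rewrite ler_pdivrMr //.
  have -> : psi * d * (c * mu) = c * (mu * psi * d) by ring.
  done.
set N := capN mu psi c.
have NK : (K <= N)%N by apply: capN_ge.
have NB : N%:R <= psi * c * mu by apply: capN_le; rewrite ltW // !mulr_gt0.
have [u0 [s1 bal]] := hp c (ltW c1).
set u := p c in u0 s1 bal *.
have DB : forall n, (n < N)%N -> u n.+1 * (c * mu) = u n * birth lam mu A psi c n.
  move=> n hn.
  have := @db_lemma R u (birth lam mu A psi c) (death mu c) N erefl bal n hn.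
  by rewrite /death /muc.
have bform : forall n, (n < N)%N ->
    birth lam mu A psi c n = c * a * (psi - n.+1%:R / (c * mu)) ^+ 2.
  move=> n hn; rewrite /birth hn /lamc /muc aE; ring.
have bup : forall n, (n < N)%N -> 0 <= birth lam mu A psi c n <= c * (a * psi ^+ 2).
  move=> n hn; rewrite bform //.
  set h := n.+1%:R / (c * mu).
  have h0 : 0 <= h by rewrite /h divr_ge0 // ltW.
  have hp' : h <= psi.
    rewrite /h ler_pdivrMr //.
    have : n.+1%:R <= N%:R :> R by rewrite ler_nat.
    move: NB; clear -hpsi; move=> NB h1.
    have -> : psi * (c * mu) = psi * c * mu by ring.
    lra.
  apply/andP; split.
    apply: mulr_ge0; [apply: mulr_ge0; exact: ltW | exact: sqr_ge0].
  rewrite [X in _ <= X]mulrA; apply: ler_wpM2l; first by rewrite mulr_ge0 // ltW.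
  rewrite !expr2; nra.
have blow : forall n, (n < K)%N -> q * (c * mu) <= birth lam mu A psi c n.
  move=> n hn; rewrite bform ?(leq_trans hn NK) //.
  set h := n.+1%:R / (c * mu).
  have h1 : h <= psi * d.
    apply: le_trans hKd; rewrite /h ler_pM2r ?invr_gt0 // ler_nat //.
  have h2 : psi * (1 - d) <= psi - h by lra.
  have h3 : 0 <= psi * (1 - d) by rewrite mulr_ge0 ?ltW //; lra.
  have e1 : q * (c * mu) = c * (l * (1 - d) ^+ 2) by rewrite -qmu; ring.
  rewrite e1 -mulrA; apply: ler_wpM2l; first exact: ltW.
  apply: (le_trans (y := a * (psi * (1 - d)) ^+ 2)).
    have -> : a * (psi * (1 - d)) ^+ 2 = (a * psi ^+ 2) * (1 - d) ^+ 2 by ring.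
    apply: ler_wpM2r => //; exact: sqr_ge0.
  apply: ler_wpM2l; first exact: ltW.
  rewrite !expr2; apply: ler_pM => //.
set T := \sum_(1 <= n < N.+1) u n.
have J : throughput mu psi c u = c * mu * T by rewrite /throughput /muc.
have T1 : T <= 1 by rewrite -s1 big_ltn ?ltnS ?(leq_trans K1 NK) // lerDr u0.
have Tq : q * (1 - K%:R^-1) <= T.
  apply: (key K1 NK q0 q1 u0 s1) => n hn.
  have hnN : (n < N)%N by apply: leq_trans hn NK.
  have := DB n hnN => hdb.
  rewrite -(ler_pM2r cmu0) hdb.
  have -> : q * u n * (c * mu) = u n * (q * (c * mu)) by ring.
  apply: ler_wpM2l; [apply: u0; exact: ltnW | exact: blow].
have Jup : c * mu * T <= c * (a * psi ^+ 2).
  rewrite /T big_add1 /= mulr_sumr.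
  rewrite (eq_big_nat _ _ (F2 := fun n => u n * birth lam mu A psi c n)); last first.
    by move=> n /andP[_ hn]; rewrite mulrC DB.
  apply: (le_trans (y := \sum_(0 <= n < N) u n * (c * (a * psi ^+ 2)))).
    apply: ler_sum_nat => n /andP[_ hn]; apply: ler_wpM2l.
      by apply: u0; exact: ltnW.
    by have /andP[] := bup n hn.
  rewrite -mulr_suml -[X in _ <= X]mul1r; apply: ler_wpM2r.
    by rewrite mulr_ge0 ?ltW // mulr_gt0.
  rewrite -s1 big_nat_recr //= lerDl; exact: u0.
have b0 : (0 < N)%N by apply: leq_trans K1 NK.
have [_ b0up] := andP (bup 0%N b0).
have b0low := blow 0%N K1.
have w1 : K%:R^-1 <= 1 :> R by rewrite invf_le1 //; lra.
have w0 : 0 < K%:R^-1 :> R by rewrite invr_gt0; lra.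
have Kw : l * K%:R^-1 <= e / 2 by [].
have key2 : l - e <= l * (1 - d) ^+ 2 * (1 - K%:R^-1).
  move: Kw w1 w0 ld d0 d1 l0; clear; move: (K%:R^-1) => w.
  move=> Kw w1 w0 ld d0 d1 l0.
  have p1 : 0 <= l * d * w.
    by apply: mulr_ge0; [apply: mulr_ge0|]; apply: ltW.
  have p2 : 0 <= l * d * d * (1 - w).
    apply: mulr_ge0; last by lra.
    by apply: mulr_ge0; [apply: mulr_ge0|]; apply: ltW.
  have -> : l * (1 - d) ^+ 2 * (1 - w) = l - 2 * (l * d) - l * w + 2 * (l * d * w) + l * d * d * (1 - w) by ring.
  lra.
have key3 : l - e <= l * (1 - d) ^+ 2.
  have : l * (1 - d) ^+ 2 * (1 - K%:R^-1) <= l * (1 - d) ^+ 2.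
    rewrite -[X in _ <= X]mulr1; apply: ler_wpM2l; first by rewrite mulr_ge0 ?exprn_ge0 ?ltW //; lra.
    lra.
  lra.
split.
  apply/andP; split.
    rewrite ler_pdivlMr // /Jub le_min; apply/andP; split.
      apply: le_trans b0low.
      have -> : q * (c * mu) = (l * (1 - d) ^+ 2) * c by rewrite -qmu; ring.
      by apply: ler_wpM2r; [exact: ltW | exact: key3].
    rewrite /muc; have -> : c * mu = mu * c by ring.
    apply: ler_wpM2r; [exact: ltW | lra].
  rewrite lE le_min; apply/andP; split; rewrite ler_pdivrMr //.
    apply: (le_trans (y := birth lam mu A psi c 0)); first by rewrite /Jub ge_min lexx.
    by rewrite mulrC; exact: b0up.
  apply: (le_trans (y := muc mu c)); first by rewrite /Jub ge_min lexx orbT.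
  by rewrite /muc mulrC.
rewrite J; apply/andP; split.
  rewrite ler_pdivlMr //.
  apply: (le_trans (y := c * mu * (q * (1 - K%:R^-1)))); last first.
    by apply: ler_wpM2l; [exact: ltW | exact: Tq].
  have -> : c * mu * (q * (1 - K%:R^-1)) = c * (l * (1 - d) ^+ 2 * (1 - K%:R^-1)).
    by rewrite -qmu; ring.
  have -> : (l - e) * c = c * (l - e) by ring.
  by apply: ler_wpM2l; [exact: ltW | exact: key2].
rewrite lE le_min; apply/andP; split; rewrite ler_pdivrMr //.
  have -> : a * psi ^+ 2 * c = c * (a * psi ^+ 2) by ring.
  exact: Jup.
have -> : mu * c = c * mu * 1 by ring.
by apply: ler_wpM2l; [exact: ltW | exact: T1].
Qed.

Theorem lemma7 (R : realType) (lam mu A psi : R)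
  (hlam : 0 < lam) (hmu : 0 < mu) (hA : 0 < A) (hpsi : 0 < psi)
  (hdisc : pi * psi ^+ 2 <= A)
  (p : R -> nat -> R)
  (hp : forall c, 1 <= c -> stationary lam mu A psi c (p c)) :
  exists l : R,
    (Jub lam mu A psi c / c @[c --> +oo] --> l) /\
    (throughput mu psi c (p c) / c @[c --> +oo] --> l).
Proof.
exists (Num.min (lam / A * pi * psi ^+ 2) mu); split; apply/cvgrPdist_le => e e0;
  have [M hM] := main_bounds hlam hmu hA hpsi hp e0;
  exists M; (split; first by rewrite num_real); move=> c hc;
  have [/andP[h1 h2] /andP[h3 h4]] := hM c hc; rewrite ler_norml; apply/andP; split; lra.
Qed.
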